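(* $\mathbf{SC}(1,1)\subseteq\mathbf{SC}'(1,1)$.
   Context: For an alphabet $V$, $V^+=V^*-\{\lambda\}$, and $\mathit{alph}(w)$ is the set of symbols occurring in $w$. A semi-conditional grammar of degree $(1,1)$ is a quadruple $G=(N,T,P,S)$ where $N$ and $T$ are disjoint finite alphabets of nonterminals and terminals, $V=N\cup T$, $S\in N$, and $P$ is a finite set of productions $(A\to x,\mathit{Per},\mathit{For})$ with $A\in N$, $x\in V^+$ (no erasing productions), $\mathit{Per},\mathit{For}\subseteq V$, $|\mathit{Per}|\le1$, $|\mathit{For}|\le1$. Its language is $L(G)=\{w\in T^*:S\Rightarrow^*w\}$. $\mathbf{SC}(1,1)$ is the family of languages generated by such grammars when the derivation step $uAv\Rightarrow uxv$ ($u,v\in V^*$) by $(A\to x,\mathit{Per},\mathit{For})$ requires $\mathit{Per}\subseteq\mathit{alph}(uAv)$ and $\mathit{alph}(uAv)\cap\mathit{For}=\emptyset$. $\mathbf{SC}'(1,1)$ is the family of languages generated by such grammars when the derivation step instead requires $\mathit{Per}\subseteq\mathit{alph}(uv)$ and $\mathit{alph}(uv)\cap\mathit{For}=\emptyset$ (the rewritten occurrence of $A$ is not taken into account). *)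

(* Defs.v *)
From mathcomp Require Import all_boot.
Set Implicit Arguments. Unset Strict Implicit. Unset Printing Implicit Defensive.

(* Symbols of a grammar with nonterminal alphabet N and terminal alphabet T:
   V = N ∪ T as a disjoint sum (disjointness is built in). *)
Definition symbol (N T : finType) := (N + T)%type.

(* A production (A -> x, Per, For); Per, For are subsets of V of size <= 1,
   represented as options (None = empty set, Some a = {a}). *)
Definition production (N T : finType) :=
  (N * seq (symbol N T) * option (symbol N T) * option (symbol N T))%type.

Definition lhs N T (p : production N T) : N := p.1.1.1.
Definition rhs N T (p : production N T) : seq (symbol N T) := p.1.1.2.
Definition per N T (p : production N T) : option (symbol N T) := p.1.2.
Definition forb N T (p : production N T) : option (symbol N T) := p.2.

Record sc_grammar (N T : finType) := SCGrammar {
  prods : seq (production N T);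
  start : N;
  prods_nonerasing : all (fun p => rhs p != [::]) prods
}.

Definition per_ok N T (c : option (symbol N T)) (s : seq (symbol N T)) : bool :=
  if c is Some a then a \in s else true.
Definition forb_ok N T (c : option (symbol N T)) (s : seq (symbol N T)) : bool :=
  if c is Some b then b \notin s else true.

(* One derivation step u A v => u x v.
   primed = false : SC semantics, conditions checked on alph(uAv);
   primed = true  : SC' semantics, conditions checked on alph(uv). *)
Definition step (primed : bool) N T (G : sc_grammar N T)
    (w1 w2 : seq (symbol N T)) : Prop :=
  exists p u v,
    [/\ p \in prods G,
        w1 = u ++ inl (lhs p) :: v,
        w2 = u ++ rhs p ++ v &
        let ctx := if primed then u ++ v else u ++ inl (lhs p) :: v in
        per_ok (per p) ctx && forb_ok (forb p) ctx].

Inductive derives (primed : bool) N T (G : sc_grammar N T) :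
    seq (symbol N T) -> seq (symbol N T) -> Prop :=
  | derives_refl w : derives primed G w w
  | derives_step w1 w2 w3 :
      step primed G w1 w2 -> derives primed G w2 w3 -> derives primed G w1 w3.

Definition lang (primed : bool) N T (G : sc_grammar N T) (w : seq T) : Prop :=
  derives primed G [:: inl (start G)] (map inr w).

(* Main.v *)
Require Import Defs.
From mathcomp Require Import all_boot.
Set Implicit Arguments. Unset Strict Implicit. Unset Printing Implicit Defensive.

Section Constr.
Variables (T N : finType).

Definition fixp (p : production N T) : production N T :=
  (lhs p, rhs p,
   if per p == Some (inl (lhs p)) then None else per p, forb p).

Definition goodp (p : production N T) : bool := forb p != Some (inl (lhs p)).

Lemma memA (a : symbol N T) A u v : a != inl A ->
  (a \in u ++ inl A :: v) = (a \in u ++ v).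
Proof. by move=> H; rewrite !mem_cat in_cons (negbTE H). Qed.

Lemma per_okA (c : option (symbol N T)) A u v : c != Some (inl A) ->
  per_ok c (u ++ inl A :: v) = per_ok c (u ++ v).
Proof.
case: c => [a|] //= H; apply: memA; apply: contra H => /eqP -> //.
Qed.

Lemma forb_okA (c : option (symbol N T)) A u v : c != Some (inl A) ->
  forb_ok c (u ++ inl A :: v) = forb_ok c (u ++ v).
Proof.
case: c => [a|] //= H; rewrite memA //; apply: contra H => /eqP -> //.
Qed.

Variable G : sc_grammar N T.

Definition prods' := map fixp (filter goodp (prods G)).

Lemma prods'_ne : all (fun p => rhs p != [::]) prods'.
Proof.
rewrite all_map; apply/allP => p; rewrite mem_filter => /andP[_ H].
exact: (allP (prods_nonerasing G) p H).
Qed.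

Definition G' := SCGrammar (start G) prods'_ne.

Lemma step_eq w1 w2 : step false G w1 w2 <-> step true G' w1 w2.
Proof.
split.
- case=> p [u [v [Hp -> -> /= /andP[Hper Hforb]]]].
  have Hg : goodp p.
    rewrite /goodp; apply/negP => /eqP E; move: Hforb; rewrite E /=.
    by rewrite mem_cat in_cons eqxx orbT.
  exists (fixp p), u, v; split => //.
  + by rewrite /prods' map_f // mem_filter Hg.
  + rewrite /= /fixp /lhs /=; apply/andP; split.
    * case: eqP => E //=.
      rewrite -(@per_okA _ (lhs p)); last by apply/eqP.
      exact Hper.
    * rewrite -(@forb_okA _ (lhs p)) //.
- case=> p' [u [v [Hp -> -> /= /andP[Hper Hforb]]]].
  move: Hp; rewrite /prods' => /mapP [p]; rewrite mem_filter => /andP[Hg Hp] E.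
  subst p'.
  exists p, u, v; split => //=; apply/andP; split.
  + move: Hper; rewrite /fixp /per /lhs /=.
    case: eqP => E //= H.
    * by rewrite /per in E; rewrite E /= mem_cat in_cons eqxx orbT.
    * by rewrite per_okA //; apply/eqP.
  + by rewrite forb_okA.
Qed.

Lemma derives_eq w1 w2 : derives false G w1 w2 <-> derives true G' w1 w2.
Proof.
split; elim=> [w|a b c H _ IH]; try exact: derives_refl;
  apply: derives_step IH; by apply/step_eq.
Qed.
End Constr.

Theorem corollary2 (T N : finType) (G : sc_grammar N T) :
  exists (N' : finType) (G' : sc_grammar N' T),
    forall w : seq T, lang false G w <-> lang true G' w.
Proof.
exists N, (G' G) => w; exact: derives_eq.
Qed.
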